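(* Let $r$ be a positive integer and let $W_r$ be the $r$-grid. Let $\mathcal{T}$ be the natural tangle of $W_r$, i.e.\ the set of all separations $(A,B)$ of $W_r$ of order less than $r$ such that $B$ contains (the vertex set of) a cross of $W_r$. Then every separation $(A,B)\in\mathcal{T}$ satisfies $|A|\leq s^2$, where $s:=|A\cap B|$ is the order of $(A,B)$.
   Context: For a positive integer $r$, the $r$-grid $W_r$ is the graph with vertex set $\{(i,j):1\le i,j\le r\}$ in which $(i,j)$ and $(i',j')$ are adjacent if and only if $|i-i'|+|j-j'|=1$. For $1\le j\le r$ the set $\{1,\dots,r\}\times\{j\}$ is the $j$th column, and for $1\le i\le r$ the set $\{i\}\times\{1,\dots,r\}$ is the $i$th row; the union of any row with any column is a cross. A separation of a graph $G$ is a pair $(A,B)$ of vertex sets with $A\cup B=V(G)$ such that no edge of $G$ joins $A\setminus B$ to $B\setminus A$; its order is $|A\cap B|$. *)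

(* Defs.v *)
From mathcomp Require Import all_boot.
Set Implicit Arguments. Unset Strict Implicit. Unset Printing Implicit Defensive.

(* Vertices of the r-grid W_r: pairs (i,j) with 0 <= i,j < r (0-indexed
   version of {1..r} x {1..r}). *)
Definition gvert (r : nat) : finType := ('I_r * 'I_r)%type.

Definition ndist (m n : nat) : nat := (m - n) + (n - m).
Definition grid_adj (r : nat) (u v : gvert r) : bool :=
  ndist u.1 v.1 + ndist u.2 v.2 == 1.

Definition grid_row (r : nat) (i : 'I_r) : {set gvert r} := [set v | v.1 == i].
Definition grid_col (r : nat) (j : 'I_r) : {set gvert r} := [set v | v.2 == j].
Definition is_cross (r : nat) (X : {set gvert r}) : Prop :=
  exists i j, X = grid_row i :|: grid_col j.

Definition is_separation (r : nat) (A B : {set gvert r}) : Prop :=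
  A :|: B = [set: gvert r] /\
  forall u v, u \in A :\: B -> v \in B :\: A -> ~~ grid_adj u v.

Definition sep_order (r : nat) (A B : {set gvert r}) : nat := #|A :&: B|.

Definition natural_tangle (r : nat) (A B : {set gvert r}) : Prop :=
  is_separation A B /\ sep_order A B < r /\
  exists X, is_cross X /\ X \subset B.

(* Main.v *)
Require Import Defs.
From mathcomp Require Import all_boot.

Lemma ndistC m n : ndist m n = ndist n m.
Proof. by rewrite /ndist addnC. Qed.

Lemma adjC r (u v : gvert r) : grid_adj u v = grid_adj v u.
Proof. by rewrite /grid_adj ndistC [ndist u.2 _]ndistC. Qed.

Lemma line r (A B : {set gvert r}) (sep : is_separation A B)
  (L : nat -> gvert r) n
  (adj : forall k, k < n -> grid_adj (L k) (L k.+1))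
  (noS : forall k, k <= n -> L k \notin A :&: B) j0 (hj0 : j0 <= n)
  (hB : L j0 \in B) : forall k, k <= n -> L k \notin A.
Proof.
case: sep => cov sep.
have inAB x : (x \in A) || (x \in B).
  by rewrite -in_setU cov inE.
have eq0 : forall k, k <= n -> (L k \in A) = (L 0 \in A).
  elim=> // k IH hk.
  rewrite -IH ?(ltnW hk) //.
  have hadj := adj k hk.
  have nk := noS k (ltnW hk). have nk1 := noS k.+1 hk.
  rewrite inE in nk. rewrite inE in nk1.
  case hA: (L k \in A); case hA1: (L k.+1 \in A) => //.
  - exfalso. have hBk : L k \notin B by rewrite hA in nk.
    have hB1 : L k.+1 \in B by move: (inAB (L k.+1)); rewrite hA1.
    have h1 : L k \in A :\: B by rewrite inE hA hBk.
    have h2 : L k.+1 \in B :\: A by rewrite inE hA1 hB1.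
    by move: (sep _ _ h1 h2); rewrite hadj.
  - exfalso. have hBk : L k.+1 \notin B by rewrite hA1 in nk1.
    have hB1 : L k \in B by move: (inAB (L k)); rewrite hA.
    have h1 : L k.+1 \in A :\: B by rewrite inE hA1 hBk.
    have h2 : L k \in B :\: A by rewrite inE hA hB1.
    by move: (sep _ _ h1 h2); rewrite adjC hadj.
move=> k hk; rewrite eq0 // -(eq0 j0 hj0).
have := noS j0 hj0; rewrite inE hB andbT //.
Qed.

Theorem lemma2 (r : nat) (hr : 0 < r) (A B : {set gvert r}) :
  natural_tangle A B -> #|A| <= (sep_order A B) ^ 2.
Proof.
move: hr A B; case: r => // r' _ A B [sep [_ [X [[i0 [j0 ->]] sub]]]].
rewrite /sep_order.
set S := A :&: B.
have HA : A \subset setX (fst @: S) (snd @: S).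
  apply/subsetP => v vA; rewrite inE; apply/andP; split; apply/negPn/negP => nv.
  - have H1 : forall k, k < r' -> grid_adj (((fun k => (v.1, inord k)) : nat -> gvert r'.+1) k) ((fun k => (v.1, inord k)) k.+1).
      move=> k hk; rewrite /grid_adj /ndist /= subnn !inordK //; last by apply: ltnW.
      by rewrite subSnn subnS subnn.
    have := @line _ _ _ sep _ _ H1 _ j0 _ _ _ (leq_ord v.2).
    rewrite /= !inord_val -surjective_pairing vA => H; have //: false; apply: H.
    + move=> k hk; apply/negP => kS; apply: (negP nv); apply/imsetP; by exists (v.1, inord k).
    + exact: leq_ord.
    + by apply: (subsetP sub); rewrite !inE /= eqxx orbT.
  - have H1 : forall k, k < r' -> grid_adj (((fun k => (inord k, v.2)) : nat -> gvert r'.+1) k) ((fun k => (inord k, v.2)) k.+1).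
      move=> k hk; rewrite /grid_adj /ndist /= subnn !inordK //; last by apply: ltnW.
      by rewrite subSnn subnS subnn.
    have := @line _ _ _ sep _ _ H1 _ i0 _ _ _ (leq_ord v.1).
    rewrite /= !inord_val -surjective_pairing vA => H; have //: false; apply: H.
    + move=> k hk; apply/negP => kS; apply: (negP nv); apply/imsetP; by exists (inord k, v.2).
    + exact: leq_ord.
    + by apply: (subsetP sub); rewrite !inE /= eqxx.
apply: (leq_trans (subset_leq_card HA)).
rewrite cardsX expnS expn1; apply: leq_mul; exact: leq_imset_card.
Qed.
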